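(* Let $\phi_\tau$ and $\psi_\tau$ be the flows of $x'=x-x^2$ and $x'=x^2-x$ respectively (the reduced Milne-state equation $\Omega'=\mu\Omega(\Omega-1)$ for $\mu=-1$ and $\mu=+1$). Then $$\phi_\tau(x)=\frac{xe^\tau}{xe^\tau-x+1},\qquad \psi_\tau(x)=\frac{x}{x-xe^\tau+e^\tau},$$ and for every state $x\in(0,1)$ the function $\tau\mapsto\phi_\tau(x)-\psi_\tau(x)$ is strictly increasing. Consequently the sync function $\omega=|\phi_\tau(x)-\psi_\tau(x)|$ does not tend to $0$ as $\tau\to+\infty$, so a Friedmann domain governed by the reduced equation $\Omega'=-\mu\Omega+\mu\Omega^2$ (with $\mu$ ranging over values on both sides of $0$) is not dynamically synchronized in the future.
   Context: $\Omega$ is the density parameter of a Friedmann universe with perfect fluid, $\mu=3\gamma-2$ the fluid parameter treated as varying, $\tau$ the dimensionless time. For a reduced system $\Omega'=F(\Omega,\mu)$ with flow $\phi_\tau(\Omega,\mu)$, the sync function is $\omega=|\phi_\tau(\Omega_+,\mu_+)-\phi_\tau(\Omega_-,\mu_-)|$ for pairs of states $\Omega_\pm$ and parameter values $\mu_\pm$; the domain is dynamically synchronized in the future if $\omega\to0$ as $\tau\to+\infty$ for all $\mu\in\mathbb{R}$, $\Omega>0$, and it desynchronizes if for some pair of parameter values and/or states this limit fails to exist or is nonzero. *)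

(* Defs.v *)
From Stdlib Require Import Reals.
From Coquelicot Require Import Coquelicot.
Open Scope R_scope.

(* Closed forms of the flows of x' = x - x^2 (phi) and x' = x^2 - x (psi). *)
Definition phi (t x : R) : R := x * exp t / (x * exp t - x + 1).
Definition psi (t x : R) : R := x / (x - x * exp t + exp t).

Definition is_solution (F : R -> R) (x : R) (u : R -> R) : Prop :=
  u 0 = x /\ forall t : R, is_derive u t (F (u t)).

Definition sync (x t : R) : R := Rabs (phi t x - psi t x).

(* Main.v *)
Require Import Defs.
From Stdlib Require Import Reals Lra.
From Coquelicot Require Import Coquelicot.
Open Scope R_scope.



Lemma h_deriv (w a : R -> R) (K : R) s :
  is_derive w s (a s * w s) ->
  is_derive (fun r => w r * w r * exp (K * r)) s
    (w s * w s * exp (K * s) * (2 * a s + K)).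
Proof.
  intros Hw.
  assert (He : is_derive (fun r => exp (K * r)) s (K * exp (K*s))).
  { auto_derive; auto; ring. }
  assert (Hww := is_derive_mult _ _ _ _ _ Hw Hw (fun n m => Rmult_comm n m)).
  assert (H := is_derive_mult _ _ _ _ _ Hww He (fun n m => Rmult_comm n m)).
  unfold mult, plus in H; simpl in H.
  replace (w s * w s * exp (K * s) * (2 * a s + K)) with
    ((a s * w s * w s + w s * (a s * w s)) * exp (K * s) + w s * w s * (K * exp (K * s))) by ring.
  exact H.
Qed.

Lemma lin_zero (w a : R -> R) :
  (forall t, is_derive w t (a t * w t)) -> (forall t, continuous a t) ->
  w 0 = 0 -> forall t, w t = 0.
Proof.
  intros Hd Hc H0 t.
  assert (Hcw : forall s, continuity_pt w s).
  { intros s. apply continuity_pt_filterlim. apply (ex_derive_continuous (K:=R_AbsRing) (V:=R_NormedModule)). eexists; apply Hd. }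
  assert (Hca : forall s, continuity_pt (fun r => Rabs (a r)) s).
  { intros s. apply continuity_pt_filterlim. apply (continuous_comp a Rabs). apply Hc.
    apply continuous_Rabs. }
  assert (Hsq : w t * w t <= 0 -> w t = 0).
  { intros. nra. }
  apply Hsq.
  destruct (Rle_dec 0 t) as [Ht|Ht].
  - destruct (continuity_ab_maj _ 0 t Ht (fun c _ => Hca c)) as [m [Hm _]].
    set (M := Rabs (a m)).
    set (K := - (2 * M)).
    destruct (MVT_gen (fun r => w r * w r * exp (K * r)) 0 t
        (fun s => w s * w s * exp (K * s) * (2 * a s + K))) as [c [Hc1 Hc2]].
    + intros; apply h_deriv; apply Hd.
    + intros s _. apply continuity_pt_filterlim. apply (ex_derive_continuous (K:=R_AbsRing) (V:=R_NormedModule) (fun r => w r * w r * exp (K * r))).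
      exists (w s * w s * exp (K * s) * (2 * a s + K)); apply h_deriv, Hd.
    + rewrite Rmin_left, Rmax_right in Hc1 by lra.
      rewrite H0 in Hc2.
      assert (Hac : Rabs (a c) <= M) by (apply Hm; lra).
      assert (0 <= w c * w c) by nra.
      assert (0 < exp (K * c)) by apply exp_pos.
      assert (0 < exp (K * t)) by apply exp_pos.
      assert (2 * a c + K <= 0) by (unfold K; apply Rabs_le_between in Hac; lra).
      assert (w c * w c * exp (K * c) * (2 * a c + K) * (t - 0) <= 0).
      { apply Rmult_le_0_r; [|lra]. apply Rmult_le_0_l; [|lra]. nra. }
      assert (w t * w t * exp (K * t) <= 0) by lra.
      nra.
  - assert (Ht' : t <= 0) by lra.
    destruct (continuity_ab_maj _ t 0 Ht' (fun c _ => Hca c)) as [m [Hm _]].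
    set (M := Rabs (a m)).
    set (K := 2 * M).
    destruct (MVT_gen (fun r => w r * w r * exp (K * r)) t 0
        (fun s => w s * w s * exp (K * s) * (2 * a s + K))) as [c [Hc1 Hc2]].
    + intros; apply h_deriv; apply Hd.
    + intros s _. apply continuity_pt_filterlim. apply (ex_derive_continuous (K:=R_AbsRing) (V:=R_NormedModule) (fun r => w r * w r * exp (K * r))).
      exists (w s * w s * exp (K * s) * (2 * a s + K)); apply h_deriv, Hd.
    + rewrite Rmin_left, Rmax_right in Hc1 by lra.
      rewrite H0 in Hc2.
      assert (Hac : Rabs (a c) <= M) by (apply Hm; lra).
      assert (0 <= w c * w c) by nra.
      assert (0 < exp (K * c)) by apply exp_pos.
      assert (0 < exp (K * t)) by apply exp_pos.
      assert (0 <= 2 * a c + K) by (unfold K; apply Rabs_le_between in Hac; lra).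
      assert (0 <= w c * w c * exp (K * c) * (2 * a c + K) * (0 - t)).
      { apply Rmult_le_pos; [|lra]. apply Rmult_le_pos; [|lra]. nra. }
      assert (w t * w t * exp (K * t) <= 0) by lra.
      nra.
Qed.




Lemma Dpos x t : 0 < x < 1 -> 0 < x * exp t - x + 1.
Proof. intros. assert (0 < exp t) by apply exp_pos. nra. Qed.
Lemma Epos x t : 0 < x < 1 -> 0 < x - x * exp t + exp t.
Proof. intros. assert (0 < exp t) by apply exp_pos. nra. Qed.

Lemma phi_der x t : 0 < x < 1 -> is_derive (fun t => phi t x) t (phi t x - phi t x ^ 2).
Proof.
  intros Hx. pose proof (Dpos x t Hx). unfold phi.
  auto_derive; [lra|]. field. lra.
Qed.
Lemma psi_der x t : 0 < x < 1 -> is_derive (fun t => psi t x) t (psi t x ^ 2 - psi t x).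
Proof.
  intros Hx. pose proof (Epos x t Hx). unfold psi.
  auto_derive; [lra|]. field. lra.
Qed.

Lemma cont_of (f : R -> R) df : (forall t, is_derive f t (df t)) -> forall t, continuous f t.
Proof. intros H t. apply (ex_derive_continuous (K:=R_AbsRing) (V:=R_NormedModule) f). exists (df t). apply H. Qed.

Lemma lt_div a b c d : 0 < b -> 0 < d -> a * d < c * b -> a / b < c / d.
Proof.
  intros Hb Hd H. apply Rlt_0_minus.
  replace (c / d - a / b) with ((c * b - a * d) / (b * d)) by (field; lra).
  apply Rdiv_lt_0_compat; nra.
Qed.

Lemma incr x t1 t2 : 0 < x < 1 -> t1 < t2 -> phi t1 x - psi t1 x < phi t2 x - psi t2 x.
Proof.
  intros Hx Ht.
  pose proof (exp_increasing _ _ Ht). pose proof (exp_pos t1).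
  assert (phi t1 x < phi t2 x).
  { unfold phi. apply lt_div; try apply Dpos; auto.
    assert (0 < x * (1 - x) * (exp t2 - exp t1)) by (apply Rmult_lt_0_compat; [nra|lra]). nra. }
  assert (psi t2 x < psi t1 x).
  { unfold psi. apply lt_div; try apply Epos; auto.
    assert (0 < x * (1 - x) * (exp t2 - exp t1)) by (apply Rmult_lt_0_compat; [nra|lra]). nra. }
  lra.
Qed.

Theorem mainTheorem8 :
  (forall x : R, 0 < x < 1 ->
     is_solution (fun y => y - y ^ 2) x (fun t => phi t x)) /\
  (forall x : R, 0 < x < 1 ->
     forall u : R -> R, is_solution (fun y => y - y ^ 2) x u ->
     forall t : R, u t = phi t x) /\
  (forall x : R, 0 < x < 1 ->
     is_solution (fun y => y ^ 2 - y) x (fun t => psi t x)) /\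
  (forall x : R, 0 < x < 1 ->
     forall u : R -> R, is_solution (fun y => y ^ 2 - y) x u ->
     forall t : R, u t = psi t x) /\
  (forall x : R, 0 < x < 1 ->
     forall t1 t2 : R, t1 < t2 ->
       phi t1 x - psi t1 x < phi t2 x - psi t2 x) /\
  (forall x : R, 0 < x < 1 ->
     ~ is_lim (sync x) p_infty 0).
Proof.
  assert (phi0 : forall x, phi 0 x = x).
  { intros x. unfold phi. rewrite exp_0. field_simplify; [reflexivity|]. lra. }
  assert (psi0 : forall x, psi 0 x = x).
  { intros x. unfold psi. rewrite exp_0. field_simplify; [reflexivity|]. lra. }
  split; [|split; [|split; [|split; [|split]]]].
  - intros x Hx. split; [apply phi0|]. intros t. apply phi_der, Hx.
  - intros x Hx u [Hu0 Hu] t.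
    assert (Hw := lin_zero (fun t => u t - phi t x) (fun t => 1 - u t - phi t x)).
    apply Rminus_diag_uniq. apply Hw.
    + intros s. eapply is_derive_ext; [intros; reflexivity|].
      pose proof (is_derive_minus _ _ _ _ _ (Hu s) (phi_der x s Hx)) as H.
      unfold minus, plus, opp in H; simpl in H.
      replace ((1 - u s - phi s x) * (u s - phi s x)) with
        (u s - u s ^ 2 + - (phi s x - phi s x ^ 2)) by ring. exact H.
    + intros s. apply (continuous_minus (fun t => 1 - u t) (fun t => phi t x)).
      apply (continuous_minus (fun _ => 1) u). apply continuous_const.
      apply (cont_of _ _ Hu). apply (cont_of _ _ (fun t => phi_der x t Hx)).
    + rewrite Hu0, phi0. ring.
  - intros x Hx. split; [apply psi0|]. intros t. apply psi_der, Hx.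
  - intros x Hx u [Hu0 Hu] t.
    assert (Hw := lin_zero (fun t => u t - psi t x) (fun t => u t + psi t x - 1)).
    apply Rminus_diag_uniq. apply Hw.
    + intros s. eapply is_derive_ext; [intros; reflexivity|].
      pose proof (is_derive_minus _ _ _ _ _ (Hu s) (psi_der x s Hx)) as H.
      unfold minus, plus, opp in H; simpl in H.
      replace ((u s + psi s x - 1) * (u s - psi s x)) with
        (u s ^ 2 - u s + - (psi s x ^ 2 - psi s x)) by ring. exact H.
    + intros s. apply (continuous_minus (fun t => u t + psi t x) (fun _ => 1)).
      apply (continuous_plus u (fun t => psi t x)).
      apply (cont_of _ _ Hu). apply (cont_of _ _ (fun t => psi_der x t Hx)).
      apply continuous_const.
    + rewrite Hu0, psi0. ring.
  - intros x Hx t1 t2 Ht. apply incr; auto.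
  - intros x Hx Hl. apply is_lim_spec in Hl.
    assert (Hd1 : 0 < phi 1 x - psi 1 x).
    { pose proof (incr x 0 1 Hx Rlt_0_1). rewrite phi0, psi0 in H. lra. }
    destruct (Hl (mkposreal _ Hd1)) as [M HM]. simpl in HM.
    set (t := Rmax M 1 + 1).
    assert (M < t) by (unfold t; pose proof (Rmax_l M 1); lra).
    assert (1 < t) by (unfold t; pose proof (Rmax_r M 1); lra).
    specialize (HM t H). unfold sync in HM.
    pose proof (incr x 1 t Hx H0).
    rewrite Rminus_0_r, Rabs_Rabsolu, Rabs_right in HM by lra. lra.
Qed.
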